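(* Let $A$ and $Z$ be $n\times n$ complex matrices with $0\le A\le I$ and $Z$ positive definite with largest eigenvalue $a$ and smallest eigenvalue $b$. Then $$AZA \le \frac{(a+b)^2}{4ab}\, Z.$$
   Context: $\le$ denotes the Loewner order on Hermitian matrices: $X\le Y$ means $Y-X$ is positive semidefinite. *)

(* Defs.v *)
From mathcomp Require Import all_boot all_order all_algebra.
Set Implicit Arguments.
Unset Strict Implicit.
Unset Printing Implicit Defensive.
Import Order.TTheory GRing.Theory Num.Theory Num.Def.
Local Open Scope ring_scope.
Local Open Scope sesquilinear_scope.

(* Scalar field: an arbitrary numeric algebraically closed field C
   (e.g. the complex numbers); the order on C is the partial order in
   which 0 <= z iff z is a nonnegative real. *)

Definition qform {C : numClosedFieldType} {n : nat} (M : 'M[C]_n) (v : 'rV[C]_n) : C :=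
  (v *m M *m v ^t conjC) 0 0.

Definition psdmx {C : numClosedFieldType} {n : nat} (M : 'M[C]_n) : Prop :=
  M \is hermsymmx /\ forall v : 'rV[C]_n, 0 <= qform M v.

Definition pdmx {C : numClosedFieldType} {n : nat} (M : 'M[C]_n) : Prop :=
  M \is hermsymmx /\ forall v : 'rV[C]_n, v != 0 -> 0 < qform M v.

Definition loewner_le {C : numClosedFieldType} {n : nat} (X Y : 'M[C]_n) : Prop :=
  psdmx (Y - X).

Definition largest_eigenvalue {C : numClosedFieldType} {n : nat} (M : 'M[C]_n) (a : C) : Prop :=
  eigenvalue M a /\ forall c, eigenvalue M c -> c <= a.

Definition smallest_eigenvalue {C : numClosedFieldType} {n : nat} (M : 'M[C]_n) (b : C) : Prop :=
  eigenvalue M b /\ forall c, eigenvalue M c -> b <= c.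

(* Main.v *)
From mathcomp Require Import all_boot all_order all_algebra.
Require Import Defs.
From mathcomp Require Import ring.
Import Order.TTheory GRing.Theory Num.Theory.
Local Open Scope ring_scope.
Local Open Scope sesquilinear_scope.
Set Implicit Arguments.
Unset Strict Implicit.

Section Core.
Variable C : numClosedFieldType.

Lemma real_sq_ge0 (r : C) : r \is Num.real -> 0 <= r ^+ 2.
Proof. by rewrite realEsqr. Qed.

Lemma expand_lemma n (d x y : 'I_n -> C) (q s : C) :
  q \is Num.real -> s \is Num.real -> (forall j, d j \is Num.real) ->
  (forall j, d j != 0) ->
  \sum_j d j * ((q * x j - s * y j / d j) * (q * x j - s * y j / d j)^*)
  = q ^+ 2 * (\sum_j d j * (x j * (x j)^*))
    - q * s * (\sum_j x j * (y j)^* + (\sum_j x j * (y j)^*)^*)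
    + s ^+ 2 * (\sum_j y j * (y j)^* / d j).
Proof.
move=> qr sr dr dn0.
rewrite rmorph_sum -big_split /= !mulr_sumr -sumrB -big_split /=.
apply: eq_bigr => j _.
rewrite rmorphB /= !rmorphM /= fmorphV /= (conj_Creal qr) (conj_Creal sr) (conj_Creal (dr j)) ?conjCK.
by field.
Qed.

Lemma core n (d x y : 'I_n -> C) (a b : C) :
  0 < b -> b <= a -> (forall j, b <= d j <= a) ->
  \sum_j y j * (y j)^* <= \sum_j x j * (y j)^* ->
  4 * a * b * (\sum_j d j * (y j * (y j)^*)) <=
  (a + b) ^+ 2 * (\sum_j d j * (x j * (x j)^*)).
Proof.
move=> b0 ba hd hST.
have a0 : 0 < a by apply: lt_le_trans ba.
have d0 j : 0 < d j by case/andP: (hd j) => /(lt_le_trans b0).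
have dn0 j : d j != 0 by rewrite gt_eqF.
set p := fun j => y j * (y j)^*.
have p0 j : 0 <= p j by apply: mul_conjC_ge0.
set S := \sum_j p j.
set T := \sum_j x j * (y j)^*.
set Py := \sum_j d j * p j.
set Px := \sum_j d j * (x j * (x j)^*).
set Q := \sum_j p j / d j.
have S0 : 0 <= S by apply: sumr_ge0 => j _.
have Q0 : 0 <= Q by apply: sumr_ge0 => j _; rewrite divr_ge0 // ltW.
have Py0 : 0 <= Py by apply: sumr_ge0 => j _; rewrite mulr_ge0 // ltW.
have Px0 : 0 <= Px by apply: sumr_ge0 => j _; rewrite mulr_ge0 ?mul_conjC_ge0 // ltW.
set K := (a + b) * S - Py - a * b * Q.
have K0 : 0 <= K.
  have -> : K = \sum_j p j * (a - d j) * (d j - b) / d j.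
    rewrite /K /S /Py /Q !mulr_sumr -!sumrB; apply: eq_bigr => j _.
    by field.
  apply: sumr_ge0 => j _; case/andP: (hd j) => h1 h2.
  apply: divr_ge0; last exact: ltW.
  by apply: mulr_ge0; [apply: mulr_ge0|]; rewrite ?subr_ge0.
have H2 : 4 * a * b * Py * Q <= (a + b) ^+ 2 * S ^+ 2.
  rewrite -subr_ge0.
  have -> : (a + b) ^+ 2 * S ^+ 2 - 4 * a * b * Py * Q =
     K ^+ 2 + 2 * K * (Py + a * b * Q) + (Py - a * b * Q) ^+ 2.
    by rewrite /K; ring.
  have abQ : 0 <= a * b * Q by rewrite mulr_ge0 // mulr_ge0 // ltW.
  apply: addr_ge0; first apply: addr_ge0.
  - exact: exprn_ge0 K0.
  - by apply: mulr_ge0; [apply: mulr_ge0 => //; exact: ler0n | exact: addr_ge0].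
  by apply: real_sq_ge0; rewrite rpredB ?ger0_real.
have Sr : S \is Num.real by apply: ger0_real.
have Qr : Q \is Num.real by apply: ger0_real.
have Tr : T \is Num.real.
  have : T - S \is Num.real by apply: ger0_real; rewrite subr_ge0.
  by move/(rpredD Sr); rewrite addrC subrK.
have H3 : Q * S ^+ 2 <= Q ^+ 2 * Px.
  have Q0' := Q0.
  have E : 0 <= \sum_j d j * ((Q * x j - S * y j / d j) * (Q * x j - S * y j / d j)^*).
    by apply: sumr_ge0 => j _; rewrite mulr_ge0 ?mul_conjC_ge0 // ltW.
  have eqE := @expand_lemma n d x y Q S Qr Sr (fun j => ger0_real (ltW (d0 j))) dn0.
  rewrite eqE conj_Creal // in E.
  rewrite -subr_ge0; apply: le_trans E _.
  rewrite -subr_ge0.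
  have -> : Q ^+ 2 * Px - Q * S ^+ 2 - (Q ^+ 2 * Px - Q * S * (T + T) + S ^+ 2 * Q)
     = 2 * Q * S * (T - S) by ring.
  by rewrite !mulr_ge0 // subr_ge0.
have [Qz|Qnz] := eqVneq Q 0.
  have pz j : p j = 0.
    have h : forall i, predT i -> 0 <= p i / d i by move=> i _; rewrite divr_ge0 // ltW.
    have /eqP := @psumr_eq0P C _ predT (fun i => p i / d i) h Qz j isT.
    by rewrite mulf_eq0 invr_eq0 (negbTE (dn0 j)) orbF => /eqP.
  have -> : Py = 0 by rewrite /Py big1 // => j _; rewrite pz mulr0.
  by rewrite mulr0 mulr_ge0 // real_sq_ge0 // rpredD ?ger0_real ?ltW.
have Qp : 0 < Q by rewrite lt_def Qnz.
have Q2 : 0 < Q ^+ 2 by rewrite exprn_gt0.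
rewrite -subr_ge0 -(pmulr_rge0 _ Q2).
have Hx : 0 <= Q ^+ 2 * ((a + b) ^+ 2 * Px) - Q * ((a + b) ^+ 2 * S ^+ 2).
  rewrite mulrCA [Q * _]mulrCA -mulrBr mulr_ge0 ?subr_ge0 //.
  by apply: real_sq_ge0; rewrite rpredD ?ger0_real ?ltW.
apply: le_trans Hx _; rewrite -subr_ge0.
have -> : Q ^+ 2 * ((a + b) ^+ 2 * Px - 4 * a * b * Py) -
  (Q ^+ 2 * ((a + b) ^+ 2 * Px) - Q * ((a + b) ^+ 2 * S ^+ 2)) =
  Q * ((a + b) ^+ 2 * S ^+ 2 - 4 * a * b * Py * Q) by ring.
by rewrite mulr_ge0 // subr_ge0.
Qed.
End Core.
Section Mx.
Variable C : numClosedFieldType.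
Variable n : nat.
Implicit Types (M P A : 'M[C]_n) (v w : 'rV[C]_n).

Lemma trC_mul m p q (X : 'M[C]_(m, p)) (Y : 'M[C]_(p, q)) :
  (X *m Y) ^t* = Y ^t* *m X ^t*.
Proof. by rewrite trmx_mul map_mxM. Qed.

Lemma herm_tr M : M \is hermsymmx -> M ^t* = M.
Proof. by move/is_hermitianmxP => {2}->; rewrite expr0 scale1r. Qed.

Lemma dotE v w : (v *m w ^t*) 0 0 = \sum_j v 0 j * (w 0 j)^*.
Proof. by rewrite mxE; apply: eq_bigr => j _; rewrite !mxE. Qed.

Lemma qformB M1 M2 v : qform (M1 - M2) v = qform M1 v - qform M2 v.
Proof. by rewrite /qform mulmxBr mulmxBl !mxE. Qed.

Lemma qformZ c M v : qform (c *: M) v = c * qform M v.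
Proof. by rewrite /qform -scalemxAr -scalemxAl mxE. Qed.

Lemma qform_diag P (d : 'rV[C]_n) v :
  qform (P ^t* *m diag_mx d *m P) v =
  \sum_j d 0 j * ((v *m P ^t*) 0 j * ((v *m P ^t*) 0 j)^*).
Proof.
rewrite /qform !mulmxA -[_ *m P *m _]mulmxA.
have -> : P *m v ^t* = (v *m P ^t*) ^t* by rewrite trC_mul trmxCK.
rewrite dotE; apply: eq_bigr => j _.
by rewrite mul_mx_diag mxE mulrCA mulrA.
Qed.

Lemma qform_sandwich A M v : A \is hermsymmx ->
  qform (A *m M *m A) v = qform M (v *m A).
Proof.
move=> hA; rewrite /qform trC_mul (herm_tr hA).
by rewrite !mulmxA.
Qed.

Lemma qform_row P (d : 'rV[C]_n) j : P *m P ^t* = 1%:M ->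
  qform (P ^t* *m diag_mx d *m P) (row j P) = d 0 j.
Proof.
move=> PU; rewrite qform_diag -row_mul PU row1.
rewrite (bigD1 j) //= big1 => [|k kj]; last by rewrite !mxE (negbTE kj) /= mul0r mulr0.
by rewrite !mxE !eqxx /= conjC1 !mulr1 addr0.
Qed.

Lemma eigen_row P (d : 'rV[C]_n) j : P *m P ^t* = 1%:M ->
  eigenvalue (P ^t* *m diag_mx d *m P) (d 0 j).
Proof.
move=> PU; apply/eigenvalueP; exists (row j P).
  by rewrite !mulmxA -row_mul PU -row_mul mul1mx row_diag_mx -scalemxAl -rowE.
apply/negP => /eqP h.
have : row j (P *m P ^t*) = 0 by rewrite row_mul h mul0mx.
rewrite PU row1 => /matrixP /(_ 0 j); rewrite !mxE !eqxx /=.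
by move/eqP; rewrite oner_eq0.
Qed.

Lemma spectral_herm M : M \is hermsymmx ->
  exists P (d : 'rV[C]_n), [/\ P *m P ^t* = 1%:M, P ^t* *m P = 1%:M &
    M = P ^t* *m diag_mx d *m P].
Proof.
move=> hM; have /orthomx_spectralP E := hermitian_normalmx hM.
have U := spectral_unitarymx M.
exists (spectralmx M), (spectral_diag M); split.
- exact/unitarymxP.
- exact/mulmx1C/unitarymxP.
- by rewrite {1}E invmx_unitary.
Qed.

End Mx.

Theorem corollary1p5 (C : numClosedFieldType) (n : nat) (A Z : 'M[C]_n) (a b : C) :
  loewner_le 0 A -> loewner_le A 1%:M ->
  pdmx Z -> largest_eigenvalue Z a -> smallest_eigenvalue Z b ->
  loewner_le (A *m Z *m A) (((a + b) ^+ 2 / (4 * a * b)) *: Z).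
Proof.
rewrite /loewner_le subr0.
move=> [hA psA] [hIA psIA] [hZ pdZ] [eiga maxa] [eigb minb].
have ba : b <= a by apply: maxa.
have b0 : 0 < b.
  case/eigenvalueP: eigb => v vZ vn0.
  have := pdZ v vn0; rewrite /qform vZ -scalemxAl mxE.
  have N0 : 0 <= (v *m v ^t*) 0 0 by rewrite dotE sumr_ge0 // => j _; apply: mul_conjC_ge0.
  move=> bN.
  have Nn0 : (v *m v ^t*) 0 0 != 0 by apply/eqP => h; move: bN; rewrite h mulr0 ltxx.
  have Np : 0 < (v *m v ^t*) 0 0 by rewrite lt_def Nn0.
  by rewrite -(pmulr_lgt0 _ Np).
have a0 : 0 < a by apply: lt_le_trans ba.
have [P [d [PU PU' EZ]]] := spectral_herm hZ.
have hd j : b <= d 0 j <= a.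
  have e : eigenvalue Z (d 0 j) by rewrite EZ; apply: eigen_row.
  by rewrite minb // maxa.
have [Q [e [QU QU' EA]]] := spectral_herm hA.
have e01 j : 0 <= e 0 j <= 1.
  apply/andP; split.
    by have := psA (row j Q); rewrite EA qform_row.
  rewrite -subr_ge0.
  have := psIA (row j Q).
  have -> : (1%:M : 'M[C]_n) - A = Q ^t* *m diag_mx (const_mx 1 - e) *m Q.
    by rewrite EA linearB /= diag_const_mx mulmxBr mulmxBl mulmx1 QU'.
  by rewrite qform_row // !mxE.
set c := (a + b) ^+ 2 / (4 * a * b).
have c0 : 0 <= c.
  apply: divr_ge0; first by apply: exprn_ge0; rewrite addr_ge0 // ltW.
  by apply: mulr_ge0; [apply: mulr_ge0 => //; exact: ltW | exact: ltW].
have cr : c^* = c by apply: conj_Creal; apply: ger0_real.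
split.
  apply/is_hermitianmxP; rewrite expr0 scale1r.
  have cZ : (c *: Z) ^t* = c *: Z.
    rewrite -{2}(herm_tr hZ); apply/matrixP => i j; by rewrite !mxE rmorphM /= conj_Creal // ger0_real.
  rewrite linearB /= map_mxB /= cZ.
  by rewrite !trC_mul (herm_tr hA) (herm_tr hZ) mulmxA.
move=> v.
rewrite qformB qformZ qform_sandwich // EZ !qform_diag.
set x := fun j => (v *m P ^t*) 0 j.
set y := fun j => (v *m A *m P ^t*) 0 j.
have hST : \sum_j y j * (y j)^* <= \sum_j x j * (y j)^*.
  have ES : \sum_j y j * (y j)^* = qform (A *m A) v.
    rewrite /y -dotE trC_mul trmxCK !mulmxA -[_ *m P ^t* *m P]mulmxA PU' mulmx1.
    by rewrite trC_mul (herm_tr hA) /qform !mulmxA.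
  have ET : \sum_j x j * (y j)^* = qform A v.
    rewrite /x /y -dotE trC_mul trmxCK !mulmxA -[_ *m P ^t* *m P]mulmxA PU' mulmx1.
    by rewrite trC_mul (herm_tr hA) /qform !mulmxA.
  rewrite ES ET -subr_ge0 -qformB.
  have -> : A - A *m A = Q ^t* *m diag_mx (e - \row_j (e 0 j * e 0 j)) *m Q.
    rewrite EA linearB /= mulmxBr mulmxBl; congr (_ - _).
    rewrite !mulmxA -[Q ^t* *m diag_mx e *m Q *m Q ^t*]mulmxA QU mulmx1.
    by rewrite -mulmx_diag !mulmxA.
  rewrite qform_diag sumr_ge0 // => j _.
  apply: mulr_ge0; last exact: mul_conjC_ge0.
  rewrite !mxE; case/andP: (e01 j) => h0 h1.
  have -> : e 0 j - e 0 j * e 0 j = e 0 j * (1 - e 0 j) by ring.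
  by rewrite mulr_ge0 // subr_ge0.
have := core b0 ba hd hST.
rewrite -/x -/y.
move=> H.
rewrite subr_ge0 /c.
have p4 : 0 < 4 * a * b by rewrite !mulr_gt0.
rewrite mulrAC ler_pdivlMr // mulrC.
exact: H.
Qed.
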